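(* Let $w\in F$ and suppose $w=a_1a_2\cdots a_k$ with $k\ge1$, where for each $i$ either $a_i$ or $a_i^{-1}$ belongs to $\{x_0,x_1,x_2,\dots\}$, and suppose that for each $i<k$, if $a_i=x_r^{\pm1}$ then $a_{i+1}=x_{r+1}^{\pm1}$ or $a_{i+1}=x_{r-1}^{\pm1}$. Then $w\neq 1$ in $F$.
   Context: $F$ is Thompson's group with infinite presentation $\langle x_k,\ k\ge0 \mid x_i^{-1}x_jx_i=x_{j+1}\text{ for } i<j\rangle$. *)

(* Defs.v *)
From mathcomp Require Import all_boot.
Set Implicit Arguments. Unset Strict Implicit. Unset Printing Implicit Defensive.

(* Elements are represented by words over the letters x_k^{±1};
   a letter is a pair (k, b) standing for x_k if b = false and x_k^{-1}
   if b = true. *)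

Definition letter := (nat * bool)%type.
Definition word := seq letter.

Definition gen (k : nat) : letter := (k, false).
Definition geninv (k : nat) : letter := (k, true).

Inductive F_eq : word -> word -> Prop :=
| F_refl u : F_eq u u
| F_sym u v : F_eq u v -> F_eq v u
| F_trans u v w : F_eq u v -> F_eq v w -> F_eq u w
| F_ctx p s u v : F_eq u v -> F_eq (p ++ u ++ s) (p ++ v ++ s)
| F_cancel_r k : F_eq [:: gen k; geninv k] [::]
| F_cancel_l k : F_eq [:: geninv k; gen k] [::]
| F_rel i j : i < j -> F_eq [:: geninv i; gen j; gen i] [:: gen j.+1].

Definition F_trivial (w : word) : Prop := F_eq w [::].

(* Main.v *)
Require Import Defs.
From mathcomp Require Import all_boot zify.
From Stdlib Require Import FunctionalExtensionality.
Set Implicit Arguments. Unset Strict Implicit. Unset Printing Implicit Defensive.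

Definition state := (nat * (nat -> bool))%type.
Definition push (b : bool) (f : nat -> bool) : nat -> bool :=
  fun i => if i is k.+1 then f k else b.
Definition tl (f : nat -> bool) : nat -> bool := fun i => f i.+1.

Definition step (a : letter) (s : state) : state :=
  let n := a.1 in let p := s.1 in let f := s.2 in
  if ~~ a.2 then
    if p < n then s else if p == n then (n, push false f)
    else if p == n.+1 then (n, push true f) else (p.-1, f)
  else
    if p < n then s else if p == n then (if f 0 then (n.+1, tl f) else (n, tl f))
    else (p.+1, f).

Definition act (w : word) (s : state) : state := foldr step s w.

Lemma push_tl f : push (f 0) (tl f) = f.
Proof. by apply: functional_extensionality => -[]. Qed.

Ltac splitall := repeat (case: ifP => /=); move=> *; try lia.

Ltac split_one :=
  match goal with |- context [if ?c then _ else _] =>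
    lazymatch c with context [if _ then _ else _] => fail | _ =>
      let H := fresh "H" in case H: c => /= end end.

Ltac solve_step f :=
  rewrite /act /= /step /=;
  repeat split_one;
  try lia; try congruence;
  try (f_equal; try lia; try reflexivity; try (match goal with H : f 0 = _ |- _ => rewrite -H push_tl; reflexivity end)).

Lemma act_F u v : F_eq u v -> forall s, act u s = act v s.
Proof.
elim => {u v}.
- by [].
- by move=> u v _ IH s; rewrite IH.
- by move=> u v w _ IH1 _ IH2 s; rewrite IH1 IH2.
- by move=> p s u v _ IH st; rewrite /act !foldr_cat -!/(act _ _) IH.
- move=> k [p f]; solve_step f.
- move=> k [p f]; solve_step f.
- move=> i j Hij [p f]; solve_step f.
Qed.

Lemma F_l p u v : F_eq u v -> F_eq (p ++ u) (p ++ v).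
Proof. by move=> H; have := F_ctx p [::] H; rewrite !cats0. Qed.
Lemma F_r s u v : F_eq u v -> F_eq (u ++ s) (v ++ s).
Proof. by move=> H; have := F_ctx [::] s H. Qed.

Lemma B0 m j e : m < j -> F_eq [:: geninv m; (j, e)] [:: (j.+1, e); geninv m].
Proof.
move=> Hmj; case: e.
- apply: (@F_trans _ [:: geninv j.+1; gen j.+1; geninv m; geninv j]).
    by apply: F_sym; have := F_ctx [::] [:: geninv m; geninv j] (F_cancel_l j.+1).
  apply: (@F_trans _ [:: geninv j.+1; geninv m; gen j; gen m; geninv m; geninv j]).
    by have := F_ctx [:: geninv j.+1] [:: geninv m; geninv j] (F_sym (F_rel Hmj)).
  apply: (@F_trans _ [:: geninv j.+1; geninv m; gen j; geninv j]).
    by have := F_ctx [:: geninv j.+1; geninv m; gen j] [:: geninv j] (F_cancel_r m).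
  by have := F_ctx [:: geninv j.+1; geninv m] [::] (F_cancel_r j).
- apply: (@F_trans _ [:: geninv m; gen j; gen m; geninv m]).
    by apply: F_sym; have := F_ctx [:: geninv m; gen j] [::] (F_cancel_r m).
  by have := F_ctx [::] [:: geninv m] (F_rel Hmj).
Qed.

Lemma B1 m e H : forall j, m < j ->
  F_eq (nseq H (geninv m) ++ [:: (j, e)]) ((j + H, e) :: nseq H (geninv m)).
Proof.
elim: H => [|H IH] j Hj /=; first by rewrite addn0; apply: F_refl.
apply: (@F_trans _ (geninv m :: (j + H, e) :: nseq H (geninv m))).
  by have := F_l [:: geninv m] (IH j Hj).
rewrite addnS.
have := F_r (nseq H (geninv m)) (@B0 m (j + H) e ltac:(lia)). by [].
Qed.

Fixpoint conv (m : nat) (w : word) (H : nat) : word :=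
  match w with
  | [::] => [::]
  | a :: w' => if a.1 == m then (if a.2 then conv m w' H.+1 else conv m w' H.-1)
               else (a.1 + H, a.2) :: conv m w' H
  end.
Fixpoint fin (m : nat) (w : word) (H : nat) : nat :=
  match w with
  | [::] => H
  | a :: w' => if a.1 == m then (if a.2 then fin m w' H.+1 else fin m w' H.-1)
               else fin m w' H
  end.
Definition cpos m (w : word) := count (fun a : letter => (a.1 == m) && ~~ a.2) w.
Definition cneg m (w : word) := count (fun a : letter => (a.1 == m) && a.2) w.

Lemma nseq_cons (T : Type) H (x : T) w : nseq H x ++ x :: w = nseq H.+1 x ++ w.
Proof. by elim: H => //= H ->. Qed.
Lemma nseqSr (T : Type) H (x : T) : nseq H.+1 x = nseq H x ++ [:: x].
Proof. by rewrite -(cats0 (nseq H.+1 x)) -nseq_cons. Qed.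

Lemma L1 m w : forall H, all (fun a : letter => m <= a.1) w -> cpos m w <= H ->
  F_eq (nseq H (geninv m) ++ w) (conv m w H ++ nseq (fin m w H) (geninv m)).
Proof.
rewrite /cpos; elim: w => [|[n e] w IH] H /=; first by rewrite cats0 => _ _; apply: F_refl.
move=> /andP[hn hall] hc.
case: eqP => [En|Nn].
- subst n; move: hc; rewrite eqxx /=; case: e => /= hc.
  + rewrite (nseq_cons H (geninv m) w). apply: IH => //; lia.
  + case: H hc => [|H] hc; first lia.
    rewrite -nseq_cons.
    apply: (@F_trans _ (nseq H (geninv m) ++ w)).
      exact: (F_ctx (nseq H (geninv m)) w (F_cancel_l m)).
    apply: IH => //; lia.
- have hmn : m < n by lia.
  have -> : nseq H (geninv m) ++ (n, e) :: w = (nseq H (geninv m) ++ [:: (n, e)]) ++ w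
    by rewrite -catA.
  apply: F_trans; first exact: (F_r w (B1 e H hmn)).
  rewrite /=. apply: (F_l [:: (n + H, e)]). apply: IH => //.
  move: hc; have -> : (n == m) = false by lia. by [].
Qed.

Lemma fin_eq m w : forall H, cpos m w <= H -> fin m w H + cpos m w = H + cneg m w.
Proof.
rewrite /cpos /cneg; elim: w => [|[n e] w IH] H /=; first lia.
case: eqP => [_|_] /=; last by move=> h; apply: IH.
case: e => /= h; [have := IH H.+1 | have := IH H.-1]; lia.
Qed.

Definition fJ (J : nat) : nat -> bool := fun i => i == J.

Lemma act_fJ m w : forall J, all (fun a : letter => m <= a.1) w -> cneg m w <= J ->
  act w (m, fJ J) = (m, fJ (J + cpos m w - cneg m w)).
Proof.
rewrite /cpos /cneg; elim: w => [|[n e] w IH] J /=; first by rewrite addn0 subn0.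
move=> /andP[hn hall] hc.
rewrite -/(act w _) IH //; last by lia.
rewrite /step /=.
case: eqP => [En|Nn] /=.
- subst n; rewrite ltnn eqxx; case: e hc => /= hc.
  + rewrite eqxx /= in hc.
    set K := (J + _ - _).
    have -> : fJ K 0 = false by rewrite /fJ /K; lia.
    f_equal. apply: functional_extensionality => i. rewrite /tl /fJ /K. lia.
  + rewrite eqxx /= in hc.
    f_equal. apply: functional_extensionality => -[|i]; rewrite /push /fJ; lia.
- have -> : m < n by lia. have -> : (n == m) = false by lia. by case: e hc.
Qed.

Lemma size_conv m w : forall H, size (conv m w H) + count (fun a : letter => a.1 == m) w = size w.
Proof.
elim: w => [|[n e] w IH] H //=.
case: eqP => _ /=; last by have := IH H; lia.
case: e => /=; have := IH H.+1; have := IH H.-1; lia.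
Qed.

Definition adj (a b : letter) : bool := (b.1 == a.1.+1) || (b.1.+1 == a.1).

Lemma conv_nil m H : conv m [::] H = [::].
Proof. by []. Qed.

Lemma conv_path m w : forall H x, m < x.1 -> all (fun a : letter => m <= a.1) w ->
  cpos m w <= H -> path adj x w -> path adj (x.1 + H, x.2) (conv m w H).
Proof.
rewrite /cpos; elim: w => [//|[n e] w IH] H [xn xe] /= hx /andP[hn hall] hc /andP[hxa hp].
case: eqP => [En|Nn].
- subst n. move: hxa hc; rewrite /adj /= eqxx /= => hxa hc.
  have hxn : xn = m.+1 by lia.
  case: w IH hall hc hp => [|[d de] w'] IH hall hc hp; first by case: e hc hp.
  move: hp hall; rewrite /= => /andP[hmd hp] /andP[hd hall'].
  have hdm : d = m.+1 by move: hmd; rewrite /adj /=; lia.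
  have Hd : (d == m) = false by lia.
  have key : forall H', cpos m ((d, de) :: w') <= H' ->
      path adj (d.+1 + H', false) (conv m ((d, de) :: w') H').
    move=> H' hH'. apply: (IH H' (d.+1, false)) => //=; first lia.
    by rewrite /adj /= eqxx orbT hp.
  move: (key) ; rewrite /cpos /= Hd => key'.
  case: e hc hmd => /= hc hmd.
  + have := key' H.+1 ltac:(lia). rewrite /= => /andP[_ ->]. rewrite andbT /adj /=. lia.
  + have := key' H.-1 ltac:(lia). rewrite /= => /andP[_ ->]. rewrite andbT /adj /=. lia.
- rewrite /=. apply/andP; split.
    by move: hxa; rewrite /adj /=; lia.
  apply: (IH H (n, e)) => //=; first lia.
  move: hc; have -> : (n == m) = false by lia. by [].
Qed.

Lemma conv_sorted m w H : all (fun a : letter => m <= a.1) w -> cpos m w <= H ->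
  sorted adj w -> sorted adj (conv m w H).
Proof.
case: w => [//|[n e] w] /= /andP[hn hall].
rewrite /cpos /=; case: eqP => [En|Nn] hc.
- subst n. case: w hall hc => [|[d de] w''] hall hc; first by case: e hc.
  move: hall => /= /andP[hd hall''] /andP[hmd hp].
  have hdm : d = m.+1 by move: hmd; rewrite /adj /=; lia.
  have Hd : (d == m) = false by lia.
  move: hc; rewrite /= Hd /= => hc.
  case: e hc hmd => /= hc hmd; rewrite ?Hd /=.
  + by apply: (@conv_path m w'' H.+1 (d, de)) => //=; rewrite /cpos; lia.
  + by apply: (@conv_path m w'' H.-1 (d, de)) => //=; rewrite /cpos; lia.
- move=> hp; rewrite /=. apply: (@conv_path m w H (n, e)) => //=; rewrite /cpos; lia.
Qed.

Definition minf (a : letter) (r : nat) := minn a.1 r.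

Lemma foldr_min_le d (w : word) : all (fun a : letter => foldr minf d w <= a.1) w.
Proof.
elim: w => //= a w IH; apply/andP; split; first by rewrite /minf; lia.
by apply: sub_all IH => b /=; rewrite /minf; lia.
Qed.

Lemma foldr_min_has d (w : word) : foldr minf d w = d \/ has (fun a : letter => a.1 == foldr minf d w) w.
Proof.
elim: w => [|a w IH] /=; first by left.
case: (leqP a.1 (foldr minf d w)) => h.
- by right; rewrite /=; apply/orP; left; apply/eqP/esym/minn_idPl.
- have -> : minf a (foldr minf d w) = foldr minf d w by apply/minn_idPr/ltnW.
  case: IH => [IH|IH]; [by left | by right; rewrite /= IH orbT].
Qed.

Lemma act_cat u v s : act (u ++ v) s = act u (act v s).
Proof. by rewrite /act foldr_cat. Qed.

Lemma act_inv m K t : act (nseq K (geninv m)) (act (nseq K (gen m)) t) = t.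
Proof.
elim: K t => [//|K IH] t.
rewrite nseqSr act_cat /= -/(act _ _).
have := act_F (F_cancel_l m) (act (nseq K (gen m)) t). rewrite /act /= => ->.
exact: IH.
Qed.

Lemma all_eq_sorted m (w : word) : all (fun a : letter => a.1 == m) w -> sorted adj w -> size w <= 1.
Proof.
case: w => [//|a [//|b w]] /= /and3P[/eqP ha /eqP hb _] /andP[hab _].
move: hab; rewrite /adj ha hb; lia.
Qed.

Lemma one_letter n (w : word) : size w = 1 -> all (fun a : letter => a.1 == n) w ->
  cpos n w = cneg n w -> False.
Proof.
case: w => [|a [|b w]] //= _; rewrite /cpos /cneg /= andbT => ha.
rewrite ha /=. by case: a.2.
Qed.

Lemma main n : forall w : word, size w <= n -> 0 < size w -> sorted adj w ->
  ~ (forall s, act w s = s).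
Proof.
elim: n => [|n IHn] w hsz hpos hsort T; first lia.
set m := foldr minf (head (0, false) w).1 w.
have hall : all (fun a : letter => m <= a.1) w by apply: foldr_min_le.
have hhas : has (fun a : letter => a.1 == m) w.
  case: w hpos hsort T @m hall {hsz} => [//|a w] _ _ _ m hall.
  case: (foldr_min_has a.1 (a :: w)) => [E|//].
  by rewrite /= -/m -E eqxx.
have hpn : cpos m w = cneg m w.
  have hJ : cneg m w <= size w by rewrite /cneg count_size.
  have := T (m, fJ (size w)). rewrite act_fJ // => -[] /(congr1 (fun g => g (size w))).
  rewrite /fJ eqxx => /esym /eqP. lia.
set K := cpos m w.
have hfin : fin m w K = K by have := fin_eq (H := K) (leqnn _); lia.
have L := L1 hall (leqnn K). rewrite hfin in L.
have T' : forall s, act (conv m w K) s = s.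
  move=> s. rewrite -(act_inv m K s).
  have := act_F L (act (nseq K (gen m)) s). rewrite !act_cat T => <-. by [].
have hsc := size_conv m w K.
have hcnt : 0 < count (fun a : letter => a.1 == m) w by rewrite -has_count.
apply: (IHn (conv m w K)) => //.
- lia.
- case E: (size (conv m w K)) => //.
  exfalso. rewrite E add0n in hsc.
  have hA : all (fun a : letter => a.1 == m) w by rewrite all_count hsc.
  have h1 := all_eq_sorted hA hsort.
  exact: (one_letter (n := m) (w := w) ltac:(lia) hA hpn).
- exact: conv_sorted.
Qed.

Theorem lemma3p3 (w : word) :
  0 < size w ->
  (forall i, i.+1 < size w ->
     let r := (nth (0, false) w i).1 in
     let s := (nth (0, false) w i.+1).1 in
     s = r.+1 \/ s.+1 = r) ->
  ~ F_trivial w.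
Proof.
move=> hpos hadj htriv.
apply: (main (leqnn (size w)) hpos).
- apply/(sortedP (0, false)) => i hi. rewrite /adj.
  case: (hadj i hi) => /= ->; by rewrite eqxx ?orbT.
- move=> s. exact: (act_F htriv s).
Qed.
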